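(* Let $S,T$ be totally ordered sets and $M\colon S\times T\to\mathbf{Vec}$ pointwise finite-dimensional, middle exact and indecomposable. If there exist $x\le x'$ in $S$ and $y\le y'$ in $T$ such that, with $b=(x,y')$, $c=(x',y)$, $d=(x',y')$, the map $M_b\oplus M_c\xrightarrow{M(b\le d)-M(c\le d)}M_d$ is not surjective, then $M\cong k_B$ for a block $B$ of type bb.
   Context: $S\times T$ has the product order; modules are functors to $k$-vector spaces with structure maps $M(p\le q)$. Middle exact: for all $x\le x'$, $y\le y'$ with $a=(x,y),b=(x,y'),c=(x',y),d=(x',y')$, the sequence $M_a\to M_b\oplus M_c\to M_d$ with maps $(M(a\le b),M(a\le c))$ and $M(b\le d)-M(c\le d)$ is exact at the middle. A block of type bb is a set $J_S\times J_T$ where $J_S\subseteq S$ and $J_T\subseteq T$ are non-empty upward-closed subsets. $k_B$ is $k$ on $B$, $0$ elsewhere, with identity maps within $B$ and zero otherwise. *)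

(* Defs.v *)
From HB Require Import structures.
From mathcomp Require Import all_boot all_order all_algebra.
Set Implicit Arguments. Unset Strict Implicit. Unset Printing Implicit Defensive.
Import Order.TTheory GRing.Theory.
Local Open Scope ring_scope.

(* M_p is represented as k^(pdim p)
   (row vectors); the structure map M(p<=q) is the matrix pmap p q, acting on
   the right: v |-> v *m pmap p q.  pmap p q is only meaningful for p <= q. *)

Section PFD.
Variables (k : fieldType) (dS dT : Order.disp_t)
          (S : orderType dS) (T : orderType dT).

Definition ple (p q : S * T) : bool := ((p.1 <= q.1)%O && (p.2 <= q.2)%O).

Record pfdMod := PfdMod {
  pdim : S * T -> nat;
  pmap : forall p q : S * T, 'M[k]_(pdim p, pdim q);
  pmap_id : forall p, pmap p p = 1%:M;
  pmap_comp : forall p q r, ple p q -> ple q r ->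
                (pmap p q *m pmap q r = pmap p r)%R
}.

Definition mod_iso (M N : pfdMod) : Prop :=
  exists (f : forall p, 'M[k]_(pdim M p, pdim N p))
         (g : forall p, 'M[k]_(pdim N p, pdim M p)),
    (forall p, (f p *m g p = 1%:M)%R /\ (g p *m f p = 1%:M)%R) /\
    (forall p q, ple p q -> (pmap M p q *m f q = f p *m pmap N p q)%R).

Definition dsum_map (M N : pfdMod) p q :
  'M[k]_(pdim M p + pdim N p, pdim M q + pdim N q) :=
  block_mx (pmap M p q) 0%R 0%R (pmap N p q).

Lemma dsum_id (M N : pfdMod) p : dsum_map M N p p = 1%:M.
Proof. by rewrite /dsum_map !pmap_id -scalar_mx_block. Qed.

Lemma dsum_comp (M N : pfdMod) p q r : ple p q -> ple q r ->
  (dsum_map M N p q *m dsum_map M N q r = dsum_map M N p r)%R.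
Proof.
move=> hpq hqr; rewrite /dsum_map mulmx_block !mulmx0 !mul0mx !addr0 !add0r.
by rewrite !pmap_comp.
Qed.

Definition dsum (M N : pfdMod) : pfdMod :=
  PfdMod (@dsum_id M N) (@dsum_comp M N).

Definition zero_mod (M : pfdMod) : Prop := forall p, pdim M p = 0%N.

Definition indecomposable (M : pfdMod) : Prop :=
  ~ zero_mod M /\
  forall N1 N2 : pfdMod, mod_iso M (dsum N1 N2) -> zero_mod N1 \/ zero_mod N2.

Definition sq_diff (M : pfdMod) (b c d : S * T)
  (v : 'rV[k]_(pdim M b)) (w : 'rV[k]_(pdim M c)) : 'rV[k]_(pdim M d) :=
  (v *m pmap M b d - w *m pmap M c d)%R.

Definition middle_exact (M : pfdMod) : Prop :=
  forall (x x' : S) (y y' : T), (x <= x')%O -> (y <= y')%O ->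
    let a := (x, y) in let b := (x, y') in
    let c := (x', y) in let d := (x', y') in
    forall (v : 'rV[k]_(pdim M b)) (w : 'rV[k]_(pdim M c)),
      sq_diff d v w = 0%R <->
      exists u : 'rV[k]_(pdim M a),
        v = (u *m pmap M a b)%R /\ w = (u *m pmap M a c)%R.

Definition up_closed {d} {X : porderType d} (J : pred X) : Prop :=
  forall s s', s \in J -> (s <= s')%O -> s' \in J.
Definition nonempty {X : Type} (J : pred X) : Prop := exists s, s \in J.


Definition inB (JS : pred S) (JT : pred T) (p : S * T) : bool :=
  (p.1 \in JS) && (p.2 \in JT).

Definition kB_map (JS : pred S) (JT : pred T) p q :
  'M[k]_(nat_of_bool (inB JS JT p), nat_of_bool (inB JS JT q)) :=
  \matrix_(i, j) (if inB JS JT p && inB JS JT q then 1%R else 0%R).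

Lemma kB_id JS JT p : kB_map JS JT p p = 1%:M.
Proof.
rewrite /kB_map; case: (inB JS JT p); apply/matrixP => i j; rewrite !mxE //=.
  by rewrite !ord1.
by case: i.
Qed.

Lemma inB_up JS JT (hS : up_closed JS) (hT : up_closed JT) p q :
  ple p q -> inB JS JT p ==> inB JS JT q.
Proof.
case/andP=> h1 h2; apply/implyP; case/andP=> a b; apply/andP; split.
  exact: hS a h1.
exact: hT b h2.
Qed.

Lemma kB_comp JS JT (hS : up_closed JS) (hT : up_closed JT) p q r :
  ple p q -> ple q r ->
  (kB_map JS JT p q *m kB_map JS JT q r = kB_map JS JT p r)%R.
Proof.
move=> /(inB_up hS hT) Hpq /(inB_up hS hT) Hqr; rewrite /kB_map.
move: Hpq Hqr; case: (inB JS JT p); case: (inB JS JT q); case: (inB JS JT r)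
  => //= _ _; apply/matrixP => i j; rewrite !mxE /=;
  rewrite ?big_ord1 ?big_ord0 ?mxE ?mulr1 ?mul0r //; by case: i.
Qed.

Definition kB (JS : pred S) (JT : pred T)
  (hS : up_closed JS) (hT : up_closed JT) : pfdMod :=
  PfdMod (@kB_id JS JT) (kB_comp hS hT).

End PFD.

(* Main.v *)
Require Import Defs.
From HB Require Import structures.
From mathcomp Require Import all_boot all_order all_algebra.
From mathcomp Require Import boolp classical_sets.
From mathcomp Require Import zify.
Set Implicit Arguments. Unset Strict Implicit. Unset Printing Implicit Defensive.
Import Order.TTheory GRing.Theory.
Local Open Scope ring_scope.
Local Notation pmap := Defs.pmap.

Lemma argmin_ex (X : Type) (P : X -> Prop) (f : X -> nat) :
  (exists x, P x) -> exists x, P x /\ forall y, P y -> (f x <= f y)%N.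
Proof.
case=> x0 Px0.
have hex : exists n, `[< exists x, P x /\ f x = n >].
  by exists (f x0); apply/asboolP; exists x0.
case: (ex_minnP hex) => n /asboolP [x [Px fx]] hmin.
exists x; split => // y Py; rewrite fx; apply: hmin; apply/asboolP; by exists y.
Qed.

Lemma argmax_ex (X : Type) (P : X -> Prop) (f : X -> nat) (N : nat) :
  (exists x, P x) -> (forall x, P x -> (f x <= N)%N) ->
  exists x, P x /\ forall y, P y -> (f y <= f x)%N.
Proof.
move=> hex hN; case: (argmin_ex (fun x => N - f x)%N hex) => x [Px hx].
exists x; split => // y Py; have := hx y Py; have := hN x Px; have := hN y Py.
lia.
Qed.

Section LinAlg.
Variable K : fieldType.

Lemma subspace_mx n (P : 'rV[K]_n -> Prop) :
  P 0 -> (forall a b, P a -> P b -> P (a + b)) ->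
  (forall (c : K) a, P a -> P (c *: a)) ->
  exists m (W : 'M[K]_(m, n)), forall v, P v <-> (v <= W)%MS.
Proof.
move=> P0 PD PZ.
have Pcomb m (W : 'M[K]_(m, n)) : (forall i, P (row i W)) -> forall u : 'rV_m, P (u *m W).
  move=> hW u; rewrite mulmx_sum_row; apply: (big_ind P) => // i _; exact: PZ.
pose Q (s : {m & 'M[K]_(m, n)}) := forall i, P (row i (projT2 s)).
have [[m W] [/= QW Wmax]] : exists s, Q s /\ forall s', Q s' -> (\rank (projT2 s') <= \rank (projT2 s))%N.
  apply: (@argmax_ex _ Q (fun s => \rank (projT2 s)) n).
    by exists (existT _ 0%N (0 : 'M[K]_(0, n))) => -[].
  by move=> [? ?] _; exact: rank_leq_col.
exists m, W => v; split => [Pv|]; last first.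
  by move=> /submxP [u ->]; exact: Pcomb.
case: (boolP (v <= W)%MS) => // vW.
pose W' := col_mx W v.
have key : forall u : 'rV_(m + 1), P (u *m W').
  move=> u; rewrite -[u]hsubmxK mul_row_col; apply: PD.
    by apply: Pcomb.
  by rewrite (mx11_scalar (rsubmx _)) mul_scalar_mx; apply: PZ.
have QW' : Q (existT _ (m + 1)%N W') by move=> i /=; rewrite rowE; apply: key.
have := Wmax _ QW'; rewrite /= leqNgt.
have sWW' : (W <= W')%MS by rewrite -addsmxE addsmxSl.
rewrite (ltn_leqif (mxrank_leqif_sup sWW')) -addsmxE addsmx_sub submx_refl /=.
by rewrite vW.
Qed.

Lemma directed_affine n (J : Type) (Pj : J -> Prop) (F : J -> 'rV[K]_n -> Prop) :
  (exists j, Pj j) ->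
  (forall j, Pj j -> exists w, F j w) ->
  (forall j, Pj j -> forall a b c (l : K), F j a -> F j b -> F j c ->
     F j (a + l *: (b - c))) ->
  (forall j1 j2, Pj j1 -> Pj j2 -> exists j3, Pj j3 /\
     forall w, F j3 w -> F j1 w /\ F j2 w) ->
  exists w, forall j, Pj j -> F j w.
Proof.
move=> hne hF haff hdir.
pose Dir j v := exists b c, F j b /\ F j c /\ v = b - c.
have hDir j : Pj j -> exists m (W : 'M[K]_(m, n)), forall v, Dir j v <-> (v <= W)%MS.
  move=> Pj_j; case: (hF j Pj_j) => a Fa.
  apply: subspace_mx.
  - by exists a, a; rewrite subrr.
  - move=> _ _ [b [c [Fb [Fc ->]]]] [b' [c' [Fb' [Fc' ->]]]].
    exists (b + 1 *: (b' - c)), c'; split; first exact: haff.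
    by split => //; rewrite scale1r !addrA (addrAC b).
  - move=> l _ [b [c [Fb [Fc ->]]]].
    exists (c + l *: (b - c)), c; split; first exact: haff.
    by split => //; rewrite [c + _]addrC addrK.
pose Q (s : {j : J & {m & 'M[K]_(m, n)}}) :=
  Pj (projT1 s) /\ forall v, Dir (projT1 s) v <-> (v <= projT2 (projT2 s))%MS.
have [[j0 [m0 W0]] [[/= Pj0 hW0] W0min]] :
    exists s, Q s /\ forall s', Q s' ->
      (\rank (projT2 (projT2 s)) <= \rank (projT2 (projT2 s')))%N.
  apply: (argmin_ex (fun s => \rank (projT2 (projT2 s)))).
  case: hne => j Pj_j; case: (hDir j Pj_j) => m [W hW].
  by exists (existT _ j (existT _ m W)).
case: (hF j0 Pj0) => w Fw; exists w => j Pj_j.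
case: (hdir j0 j Pj0 Pj_j) => j3 [Pj3 h3].
case: (hDir j3 Pj3) => m3 [W3 hW3].
have W30 : (W3 <= W0)%MS.
  apply/row_subP => i; apply/hW0.
  have : Dir j3 (row i W3) by apply/hW3; exact: row_sub.
  by case=> b [c [Fb [Fc ->]]]; exists b, c; split; [exact: (h3 _ Fb).1|
     split; [exact: (h3 _ Fc).1|]].
have W03 : (W0 <= W3)%MS.
  rewrite -(geq_leqif (mxrank_leqif_sup W30)).
  exact: (W0min (existT _ j3 (existT _ m3 W3))).
case: (hF j3 Pj3) => a Fa.
have : Dir j0 (w - a) by exists w, a; split => //; split => //; exact: (h3 _ Fa).1.
move=> /hW0 hw; have /hW3 [b [c [Fb [Fc e]]]] := submx_trans hw W03.
have -> : w = a + 1 *: (b - c) by rewrite scale1r -e addrC subrK.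
by apply: (h3 _ _).2; apply: haff.
Qed.


Lemma inv_limit (I : Type) (R : I -> I -> Prop) (n : I -> nat)
  (G : forall i j, 'M[K]_(n j, n i)) (E : forall i, 'rV[K]_(n i) -> Prop) :
  (forall i, R i i) -> (forall i j l, R i j -> R j l -> R i l) ->
  (forall i j, exists l, R i l /\ R j l) ->
  (forall i, G i i = 1%:M) ->
  (forall i j l, R i j -> R j l -> G j l *m G i j = G i l) ->
  (forall i, exists e, E i e) ->
  (forall i a b c (l : K), E i a -> E i b -> E i c -> E i (a + l *: (b - c))) ->
  (forall i j e, R i j -> E j e -> E i (e *m G i j)) ->
  exists e : forall i, 'rV[K]_(n i),
    (forall i, E i (e i)) /\ (forall i j, R i j -> e j *m G i j = e i).
Proof.
move=> Rrefl Rtr Rdir G1 GG Ene Eaff Ecomp.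
pose X := {i : I & 'rV[K]_(n i)}.
pose Fam (A : X -> Prop) u w := E u w /\
  forall x, A x -> R (projT1 x) u -> w *m G (projT1 x) u = projT2 x.
pose Inv (A : X -> Prop) := forall u, exists w, Fam A u w.
have Famaff A u a b c (l : K) : Fam A u a -> Fam A u b -> Fam A u c ->
    Fam A u (a + l *: (b - c)).
  move=> [Ea ha] [Eb hb] [Ec hc]; split; first exact: Eaff.
  move=> x Ax Rx; rewrite mulmxDl -scalemxAl mulmxBl ha // hb // hc //.
  by rewrite subrr scaler0 addr0.
have [A [InvA Amax]] : exists A, Inv A /\ forall B, (A `<` B)%classic -> ~ Inv B.
  apply: (@Zorn_bigcup X Inv) => F FInv Ftot u.
  case: (pselect (exists Y, F Y)) => [hY|hY]; last first.
    case: (Ene u) => w Ew; exists w; split => // x [Y FY _].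
    by case: hY; exists Y.
  have hd : forall Y1 Y2, F Y1 -> F Y2 -> exists Y3, F Y3 /\
      forall w, Fam Y3 u w -> Fam Y1 u w /\ Fam Y2 u w.
    move=> Y1 Y2 FY1 FY2; case: (Ftot Y1 Y2 FY1 FY2) => s12.
      exists Y2; split => // w [Ew hw]; split; split => // x Yx; apply: hw => //.
      exact: s12.
    exists Y1; split => // w [Ew hw]; split; split => // x Yx; apply: hw => //.
    exact: s12.
  have [w hw] := @directed_affine (n u) (X -> Prop) F (fun Y => Fam Y u) hY
    (fun Y FY => FInv Y FY u) (fun Y _ => @Famaff Y u) hd.
  exists w; split; first by case: hY => Y FY; case: (hw Y FY).
  by move=> x [Y FY Yx]; apply: (hw Y FY).2.
have hall q : exists v, A (existT _ q v).
  apply: contrapT => hq.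
  have hq' : forall x, A x -> projT1 x <> q.
    by move=> [i v] Ax /= eiq; subst i; apply: hq; exists v.
  pose C u w' := exists w, Fam A u w /\ w' = w *m G q u.
  have Cne : forall u, R q u -> exists w, C u w.
    by move=> u _; case: (InvA u) => w hw; exists (w *m G q u), w.
  have Caff : forall u, R q u -> forall a b c l, C u a -> C u b -> C u c ->
      C u (a + l *: (b - c)).
    move=> u _ a b c l [wa [ha ->]] [wb [hb ->]] [wc [hc ->]].
    exists (wa + l *: (wb - wc)); split; first exact: Famaff.
    by rewrite mulmxDl -scalemxAl mulmxBl.
  have Cdir : forall u1 u2, R q u1 -> R q u2 -> exists u3, R q u3 /\
      forall w, C u3 w -> C u1 w /\ C u2 w.
    move=> u1 u2 Ru1 Ru2; case: (Rdir u1 u2) => l [R1 R2].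
    exists l; split; first exact: Rtr Ru1 R1.
    have down u (Rul : R u l) (Rqu : R q u) w : C l w -> C u w.
      move=> [w0 [[Ew0 hw0] ->]]; exists (w0 *m G u l); split.
        split; first exact: Ecomp.
        move=> x Ax Rx; rewrite -mulmxA GG //; apply: hw0 => //.
        exact: Rtr Rx Rul.
      by rewrite -mulmxA GG.
    by move=> w Cw; split; [exact: down R1 Ru1 w Cw| exact: down R2 Ru2 w Cw].
  have [eq heq] := @directed_affine (n q) I (R q) C (ex_intro _ q (Rrefl q))
    Cne Caff Cdir.
  pose B := fun x : X => A x \/ x = existT _ q eq.
  apply: (Amax B); first split.
  - by move=> x Ax; left.
  - move=> sBA; have /hq' := sBA (existT _ q eq) (or_intror erefl).
    by apply.
  move=> u; case: (Rdir u q) => l [Rul Rql].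
  case: (heq l Rql) => w [[Ew hw] e].
  exists (w *m G u l); split; first exact: Ecomp.
  move=> x [Ax|->] Rx.
    by rewrite -mulmxA GG //; apply: hw => //; exact: Rtr Rx Rul.
  by rewrite /= -mulmxA GG.
pose e q := projT1 (cid (hall q)).
have eA q : A (existT _ q (e q)) by rewrite /e; case: cid.
have key j : Fam A j (e j).
  case: (InvA j) => w [Ew hw].
  have wej : w = e j by rewrite -[w]mulmx1 -G1; exact: (hw _ (eA j) (Rrefl j)).
  by rewrite -wej.
exists e; split; first by move=> i; case: (key i).
by move=> i j Rij; case: (key j) => _ h; apply: (h _ (eA i) Rij).
Qed.

End LinAlg.

Section Retract.
Variables (k : fieldType) (dS dT : Order.disp_t) (S : orderType dS) (T : orderType dT).

Section Constr.
Variables (M N : pfdMod k S T)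
  (f : forall p, 'M[k]_(pdim M p, pdim N p)) (g : forall p, 'M[k]_(pdim N p, pdim M p)).
Hypotheses (fnat : forall p q, ple p q -> pmap M p q *m f q = f p *m pmap N p q)
  (gnat : forall p q, ple p q -> pmap N p q *m g q = g p *m pmap M p q)
  (gf : forall p, g p *m f p = 1%:M).

Let Q p : 'M[k]_(pdim M p) := 1%:M - f p *m g p.
Let Km p := row_base (Q p).
Let Pm p := Q p *m pinvmx (Km p).

Let Qf p : Q p *m f p = 0.
Proof. by rewrite /Q mulmxBl mul1mx -mulmxA gf mulmx1 subrr. Qed.
Let gQ p : g p *m Q p = 0.
Proof. by rewrite /Q mulmxBr mulmx1 mulmxA gf mul1mx subrr. Qed.
Let QQ p : Q p *m Q p = Q p.
Proof. by rewrite {1}/Q mulmxBl mul1mx -mulmxA gQ mulmx0 subr0. Qed.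
Let KmQ p : exists X, Km p = X *m Q p.
Proof. by apply/submxP; rewrite /Km eq_row_base. Qed.
Let Kmf p : Km p *m f p = 0.
Proof. by case: (KmQ p) => X ->; rewrite -mulmxA Qf mulmx0. Qed.
Let KmQ' p : Km p *m Q p = Km p.
Proof. by case: (KmQ p) => X ->; rewrite -mulmxA QQ. Qed.
Let gPm p : g p *m Pm p = 0.
Proof. by rewrite /Pm mulmxA gQ mul0mx. Qed.
Let PmKm p : Pm p *m Km p = Q p.
Proof. by rewrite /Pm mulmxKpV // /Km eq_row_base. Qed.
Let KmPm p : Km p *m Pm p = 1%:M.
Proof.
apply: (row_free_inj (row_base_free (Q p))); rewrite /= mul1mx.
by rewrite -mulmxA PmKm KmQ'.
Qed.

Definition Kmap p q := Km p *m pmap M p q *m Pm q.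
Lemma Kmap_id p : Kmap p p = 1%:M.
Proof. by rewrite /Kmap pmap_id mulmx1 KmPm. Qed.
Lemma Kmap_comp p q r : ple p q -> ple q r -> Kmap p q *m Kmap q r = Kmap p r.
Proof.
move=> hpq hqr; rewrite /Kmap.
have -> : Km p *m pmap M p q *m Pm q *m (Km q *m pmap M q r *m Pm r) =
  Km p *m pmap M p q *m (Pm q *m Km q) *m pmap M q r *m Pm r.
  by rewrite !mulmxA.
rewrite PmKm /Q mulmxBr mulmx1 !mulmxBl -(mulmxA (Km p) (pmap M p q) (pmap M q r)).
rewrite (pmap_comp M hpq hqr) (mulmxA _ (f q)) -(mulmxA (Km p) (pmap M p q) (f q)) fnat //.
by rewrite mulmxA Kmf !mul0mx subr0.
Qed.
Definition Kmod : pfdMod k S T := PfdMod Kmap_id Kmap_comp.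

Lemma retract_decomp : mod_iso M (dsum N Kmod).
Proof.
exists (fun p => row_mx (f p) (Pm p)), (fun p => col_mx (g p) (Km p)); split.
  move=> p; split.
    by rewrite mul_row_col PmKm /Q addrC subrK.
  by rewrite mul_col_row gf gPm Kmf KmPm -scalar_mx_block.
move=> p q hpq; rewrite /= /dsum_map mul_row_block mul_mx_row !mulmx0 !addr0 add0r.
rewrite fnat //; congr row_mx.
rewrite /= /Kmap (mulmxA (Pm p)) (mulmxA (Pm p)) PmKm /Q mulmxBl mul1mx mulmxBl.
rewrite -(mulmxA (f p) (g p)) -gnat //.
rewrite -(mulmxA (f p) (pmap N p q *m g q) (Pm q)) -(mulmxA (pmap N p q) (g q) (Pm q)).
by rewrite gPm !mulmx0 subr0.
Qed.
End Constr.

Lemma retract_iso (M N : pfdMod k S T)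
  (f : forall p, 'M[k]_(pdim M p, pdim N p)) (g : forall p, 'M[k]_(pdim N p, pdim M p)) :
  (forall p q, ple p q -> pmap M p q *m f q = f p *m pmap N p q) ->
  (forall p q, ple p q -> pmap N p q *m g q = g p *m pmap M p q) ->
  (forall p, g p *m f p = 1%:M) ->
  ~ zero_mod N -> indecomposable M -> mod_iso M N.
Proof.
move=> fnat gnat gf nN [_ hind].
case: (hind _ _ (retract_decomp fnat gnat gf)) => // hK.
exists f, g; split => // p; split => //.
have : \rank (1%:M - f p *m g p) = 0%N by exact: hK.
by move/eqP; rewrite mxrank_eq0 subr_eq0 => /eqP <-.
Qed.
End Retract.

Section Chain.
Variables (K : fieldType) (d0 : Order.disp_t) (I : orderType d0) (n : nat)
  (m : I -> nat) (F : forall s : I, 'M[K]_(m s, n)) (P : I -> Prop).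
Hypothesis mono : forall s s', P s -> P s' -> (s <= s')%O -> (F s <= F s')%MS.
Hypothesis Pne : exists s, P s.

Lemma chain_min : exists s0, P s0 /\ forall s, P s -> (F s0 <= F s)%MS.
Proof.
case: (argmin_ex (fun s => \rank (F s)) Pne) => s0 [Ps0 hmin].
exists s0; split => // s Ps; case/orP: (le_total s0 s) => h; first exact: mono.
have hs := mono Ps Ps0 h.
by rewrite -(geq_leqif (mxrank_leqif_sup hs)); apply: hmin.
Qed.

Lemma chain_max : exists s0, P s0 /\ forall s, P s -> (F s <= F s0)%MS.
Proof.
case: (@argmax_ex _ P (fun s => \rank (F s)) n Pne (fun s _ => rank_leq_col (F s))) => s0 [Ps0 hmax].
exists s0; split => // s Ps; case/orP: (le_total s s0) => h; first exact: mono.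
have hs := mono Ps0 Ps h.
by rewrite -(geq_leqif (mxrank_leqif_sup hs)); apply: hmax.
Qed.
End Chain.

Lemma solve_lin (K : fieldType) nn m1 m2 (B : 'M[K]_(m1, nn)) (C : 'M[K]_(m2, nn))
  (c : 'cV[K]_m1) :
  (forall (w : 'rV_m1) (a : 'rV_m2), w *m B + a *m C = 0 -> w *m c = 0) ->
  exists chi : 'cV_nn, B *m chi = c /\ C *m chi = 0.
Proof.
move=> hyp.
have hypM p (Wm : 'M_(p, m1)) (Am : 'M_(p, m2)) : Wm *m B + Am *m C = 0 -> Wm *m c = 0.
  move=> e; apply/row_matrixP => i; rewrite row_mul row0; apply: (hyp _ (row i Am)).
  by have := congr1 (row i) e; rewrite linearD /= !row_mul row0.
set H := row_mx B^T C^T.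
have : (row_mx c^T (0 : 'rV_m2) <= H)%MS.
  rewrite submxE; set Y := cokermx H.
  have HY : H *m Y = 0 by exact: mulmx_coker.
  rewrite -[Y]vsubmxK mul_row_col mul0mx addr0.
  move: HY; rewrite -[Y]vsubmxK /H mul_row_col => HY.
  have e0 : (B^T *m usubmx Y + C^T *m dsubmx Y)^T =
      (usubmx Y)^T *m B + (dsubmx Y)^T *m C by rewrite linearD /= !trmx_mul !trmxK.
  have h : (usubmx Y)^T *m c = 0.
    by apply: (hypM _ _ (dsubmx Y)^T); rewrite -e0 HY trmx0.
  by apply/eqP; rewrite -[LHS]trmxK trmx_mul trmxK col_mxKu h trmx0.
case/submxP => X e; exists X^T.
move: e; rewrite /H mul_mx_row => /eq_row_mx [e1 e2].
by rewrite -[B]trmxK -[C]trmxK -!trmx_mul -e1 -e2 trmxK trmx0.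
Qed.

Section BoolMx.
Variable K : fieldType.
Lemma flat_b (b : bool) m (X Y : 'M[K]_(nat_of_bool b, m)) : b = false -> X = Y.
Proof. by case: b X Y => // X Y _; rewrite [X]flatmx0 [Y]flatmx0. Qed.
Lemma thin_b (b : bool) m (X Y : 'M[K]_(m, nat_of_bool b)) : b = false -> X = Y.
Proof. by case: b X Y => // X Y _; rewrite [X]thinmx0 [Y]thinmx0. Qed.

Definition kBmx (b1 b2 : bool) : 'M[K]_(nat_of_bool b1, nat_of_bool b2) :=
  \matrix_(i, j) (if b1 && b2 then 1 else 0).
Definition rowrep (b : bool) m (X : 'rV[K]_m) : 'M[K]_(nat_of_bool b, m) :=
  \matrix_(a, c) X 0 c.
Definition colrep (b : bool) m (Y : 'cV[K]_m) : 'M[K]_(m, nat_of_bool b) :=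
  \matrix_(a, c) Y a 0.

Lemma kB_rowrep (b1 b2 : bool) m (X : 'rV[K]_m) : b1 -> b2 ->
  kBmx b1 b2 *m rowrep b2 X = rowrep b1 X.
Proof.
case: b1; case: b2 => // _ _; apply/matrixP => a c.
by rewrite !mxE big_ord1 !mxE mul1r.
Qed.

Lemma colrep_kB (b1 b2 : bool) m (Y : 'cV[K]_m) : b1 -> b2 ->
  colrep b1 Y *m kBmx b1 b2 = colrep b2 Y.
Proof.
case: b1; case: b2 => // _ _; apply/matrixP => a c.
by rewrite !mxE big_ord1 !mxE mulr1.
Qed.

Lemma rowrep_mul b m p (X : 'rV[K]_m) (B : 'M[K]_(m, p)) :
  rowrep b X *m B = rowrep b (X *m B).
Proof. by apply/matrixP => a c; rewrite !mxE; apply: eq_bigr => l _; rewrite mxE. Qed.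

Lemma mul_colrep b m p (Y : 'cV[K]_m) (B : 'M[K]_(p, m)) :
  B *m colrep b Y = colrep b (B *m Y).
Proof. by apply/matrixP => a c; rewrite !mxE; apply: eq_bigr => l _; rewrite mxE. Qed.

Lemma colrep0 b m : colrep b (0 : 'cV[K]_m) = 0.
Proof. by apply/matrixP => a c; rewrite !mxE. Qed.

Lemma rowrep_colrep (b : bool) m (X : 'rV[K]_m) (Y : 'cV[K]_m) : b ->
  X *m Y = 1%:M -> rowrep b X *m colrep b Y = 1%:M.
Proof.
case: b => // _ e; apply/matrixP => a c; rewrite !ord1.
have := congr1 (fun N : 'M[K]_1 => N 0 0) e; rewrite /= !mxE => <-.
by apply: eq_bigr => l _; rewrite !mxE.
Qed.
End BoolMx.

Section Main.
Variables (k : fieldType) (dS dT : Order.disp_t) (S : orderType dS) (T : orderType dT).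
Variable M : pfdMod k S T.
Hypothesis hME : middle_exact M.
Local Notation A := (pmap M).
Local Notation n := (pdim M).

Lemma pleE (a c : S) (b e : T) : ple (a, b) (c, e) = (a <= c)%O && (b <= e)%O.
Proof. by []. Qed.

Lemma ple_refl (p : S * T) : ple p p.
Proof. by rewrite /ple !lexx. Qed.

Lemma ple_trans (p q r : S * T) : ple p q -> ple q r -> ple p r.
Proof.
rewrite /ple => /andP [a b] /andP [c e].
by rewrite (le_trans a c) (le_trans b e).
Qed.

Lemma ple_up (p q : S * T) : exists l, ple p l /\ ple q l.
Proof.
case: p q => [p1 p2] [q1 q2].
exists (Order.max p1 q1, Order.max p2 q2).
by rewrite !pleE !le_max !lexx !orbT.
Qed.

Lemma AA p q r : ple p q -> ple q r -> A p q *m A q r = A p r.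
Proof. exact: pmap_comp. Qed.

Lemma ME (s s' : S) (t t' : T) (v : 'rV[k]_(n (s, t'))) (w : 'rV[k]_(n (s', t))) :
  (s <= s')%O -> (t <= t')%O -> v *m A (s, t') (s', t') = w *m A (s', t) (s', t') ->
  exists u : 'rV[k]_(n (s, t)), v = u *m A (s, t) (s, t') /\ w = u *m A (s, t) (s', t).
Proof.
move=> h1 h2 e; have := hME h1 h2 => /= /(_ v w) [H _]; apply: H.
by rewrite /sq_diff e subrr.
Qed.

Variables (x x' : S) (y y' : T).
Hypotheses (hx : (x <= x')%O) (hy : (y <= y')%O).
Local Notation d := (x', y').
Definition U := (A (x, y') d + A (x', y) d)%MS.
Variable z : 'rV[k]_(n d).
Hypothesis zU : ~~ (z <= U)%MS.

Definition JS (s : S) : bool := (x' < s)%O || ~~ (A (s, y') d <= U)%MS.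

Lemma JS_up : up_closed JS.
Proof.
move=> s s'; rewrite !unfold_in /JS; case/orP=> [h|h] hss'.
  by rewrite (lt_le_trans h hss').
case: (ltP x' s') => //= hs'.
apply: contra h => h; apply: submx_trans h.
rewrite -(AA (p := (s, y')) (q := (s', y'))) ?submxMl // pleE ?hss' ?hs' ?lexx //.
Qed.

Lemma JS_x' : JS x'.
Proof.
rewrite /JS ltxx /=; apply: contra zU => h; apply: submx_trans h.
by rewrite pmap_id submx1.
Qed.

Lemma JS_x : ~~ JS x.
Proof. by rewrite /JS negb_or -leNgt hx addsmxSl. Qed.

Lemma notJS s : ~~ JS s -> (s <= x')%O /\ (A (s, y') d <= U)%MS.
Proof. by rewrite /JS negb_or -leNgt negbK => /andP. Qed.

Lemma JS_lt s s' : JS s -> ~~ JS s' -> (s' < s)%O.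
Proof.
move=> h1 h2; rewrite ltNge; apply: contra h2 => h; exact: JS_up h1 h.
Qed.


Section S1.
Variable s1 : S.
Hypotheses (JSs1 : JS s1) (s1x : (s1 <= x')%O)
  (s1min : forall s, JS s -> (s <= x')%O -> (A (s1, y') d <= A (s, y') d)%MS).
Local Notation V1 := (A (s1, y') d).

Lemma V1U : ~~ (V1 <= U)%MS.
Proof. by move: JSs1; rewrite /JS ltNge s1x. Qed.

Lemma ImxV1 : (A (x, y') d <= V1)%MS.
Proof.
have h := JS_lt JSs1 JS_x.
by rewrite -(AA (q := (s1, y'))) ?submxMl // pleE ?(ltW h) ?lexx ?s1x.
Qed.

Definition JT (t : T) : bool := (y' < t)%O || ~~ ((V1 :&: A (x', t) d) <= U)%MS.

Lemma JT_up : up_closed JT.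
Proof.
move=> t t'; rewrite !unfold_in /JT; case/orP=> [h|h] htt'.
  by rewrite (lt_le_trans h htt').
case: (ltP y' t') => //= ht'.
apply: contra h => h; apply: submx_trans h; apply: capmxS => //.
rewrite -(AA (p := (x', t)) (q := (x', t'))) ?submxMl // pleE ?htt' ?ht' ?lexx //.
Qed.

Lemma JT_y' : JT y'.
Proof.
rewrite /JT ltxx /= pmap_id; apply: contra V1U => h; apply: submx_trans h.
by rewrite sub_capmx submx_refl submx1.
Qed.

Lemma JT_y : ~~ JT y.
Proof.
rewrite /JT negb_or -leNgt hy negbK /=; apply: submx_trans (capmxSr _ _) _.
exact: addsmxSr.
Qed.

Lemma notJT t : ~~ JT t -> (t <= y')%O /\ ((V1 :&: A (x', t) d) <= U)%MS.
Proof. by rewrite /JT negb_or -leNgt negbK => /andP. Qed.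

Lemma JT_lt t t' : JT t -> ~~ JT t' -> (t' < t)%O.
Proof.
move=> h1 h2; rewrite ltNge; apply: contra h2 => h; exact: JT_up h1 h.
Qed.

Lemma Imt_mono t t' : (t <= t')%O -> (t' <= y')%O -> (A (x', t) d <= A (x', t') d)%MS.
Proof.
move=> h h'.
by rewrite -(AA (p := (x', t)) (q := (x', t'))) ?submxMl // pleE ?h ?h' ?lexx.
Qed.

Lemma Ims_mono s s' : (s <= s')%O -> (s' <= x')%O -> (A (s, y') d <= A (s', y') d)%MS.
Proof.
move=> h h'.
by rewrite -(AA (p := (s, y')) (q := (s', y'))) ?submxMl // pleE ?h ?h' ?lexx.
Qed.

Section T1.
Variables t1 t0 : T.
Hypotheses (JTt1 : JT t1) (t1y : (t1 <= y')%O)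
  (t1min : forall t, JT t -> (t <= y')%O ->
     ((V1 :&: A (x', t1) d) <= (V1 :&: A (x', t) d))%MS)
  (nJTt0 : ~~ JT t0)
  (t0max : forall t, ~~ JT t -> (A (x', t) d <= A (x', t0) d)%MS).
Local Notation V2 := (V1 :&: A (x', t1) d)%MS.
Definition W := (U + A (x', t0) d)%MS.

Lemma V2U : ~~ (V2 <= U)%MS.
Proof. by move: JTt1; rewrite /JT ltNge t1y. Qed.

Lemma V2W : ~~ (V2 <= W)%MS.
Proof.
apply: contra V2U => hW.
have [t2 [nt2 [ht0 hyt]]] : exists t2, ~~ JT t2 /\
    (A (x', t0) d <= A (x', t2) d)%MS /\ (A (x', y) d <= A (x', t2) d)%MS.
  have [t0y' _] := notJT nJTt0.
  case/orP: (le_total y t0) => h.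
    by exists t0; split => //; split => //; apply: Imt_mono.
  by exists y; split; [exact: JT_y | split => //; apply: Imt_mono].
have hW2 : (W <= A (x, y') d + A (x', t2) d)%MS.
  rewrite /W /U addsmx_sub; apply/andP; split.
    by apply: addsmxS.
  exact: submx_trans ht0 (addsmxSr _ _).
have h1 : (V2 <= (A (x, y') d + A (x', t2) d) :&: V1)%MS.
  rewrite sub_capmx capmxSl andbT; exact: submx_trans hW hW2.
rewrite -(matrix_modl _ ImxV1) in h1.
apply: submx_trans h1 _; rewrite addsmx_sub addsmxSl /=.
by rewrite capmxC; case: (notJT nt2).
Qed.


Lemma v2phi_ex : exists (v2 : 'rV[k]_(n d)) (phi : 'cV[k]_(n d)),
  (v2 <= V2)%MS /\ W *m phi = 0 /\ v2 *m phi = 1%:M.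
Proof.
case/row_subPn: V2W => i hi.
set v2 := row i V2; set C := cokermx W; set c := v2 *m C.
have [j cj] : exists j, c 0 j != 0.
  apply/existsP; apply: contraR hi; rewrite negb_exists => /forallP h.
  rewrite submxE -/C -/c; apply/eqP/matrixP => a b; rewrite ord1 [RHS]mxE.
  by move: (h b); rewrite negbK => /eqP.
exists v2, ((c 0 j)^-1 *: (C *m delta_mx j 0)); split; first exact: row_sub.
split.
  by rewrite -scalemxAr mulmxA mulmx_coker mul0mx scaler0.
rewrite -scalemxAr mulmxA -/c -colE; apply/matrixP => a b; rewrite !ord1.
rewrite [LHS]mxE [RHS]mxE eqxx /=.
by rewrite [col j c 0 0]mxE mulVf.
Qed.

Section Phi.
Variables (v2 : 'rV[k]_(n d)) (phi : 'cV[k]_(n d)).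
Hypotheses (v2V2 : (v2 <= V2)%MS) (Wphi : W *m phi = 0) (v2phi : v2 *m phi = 1%:M).

Lemma v2_from s t : JS s -> (s <= x')%O -> JT t -> (t <= y')%O ->
  exists u : 'rV[k]_(n (s, t)), u *m A (s, t) d = v2.
Proof.
move=> Js sx Jt ty.
have h2 := submx_trans v2V2 (t1min Jt ty).
have /submxP [a1 e1] : (v2 <= A (s, y') d)%MS.
  by apply: submx_trans (s1min Js sx); exact: submx_trans h2 (capmxSl _ _).
have /submxP [a2 e2] : (v2 <= A (x', t) d)%MS.
  exact: submx_trans h2 (capmxSr _ _).
have [u [ea _]] : exists u, a1 = u *m A (s, t) (s, y') /\ a2 = u *m A (s, t) (x', t).
  by apply: ME => //; rewrite -e1 -e2.
exists u; rewrite e1 ea -mulmxA AA //.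
all: by rewrite pleE ?sx ?ty ?lexx.
Qed.

Lemma Wphi0 (w : 'rV[k]_(n d)) : (w <= W)%MS -> w *m phi = 0.
Proof. by case/submxP=> c ->; rewrite -mulmxA Wphi mulmx0. Qed.

Lemma kill (r1 : S) (r2 : T) s t (w : 'rV[k]_(n d))
  (a : 'rV[k]_(n (s, r2))) (b : 'rV[k]_(n (r1, t))) :
  ple d (r1, r2) -> ~~ JS s -> ~~ JT t ->
  w *m A d (r1, r2) = a *m A (s, r2) (r1, r2) + b *m A (r1, t) (r1, r2) ->
  w *m phi = 0.
Proof.
rewrite pleE => /andP [h1 h2] nJs nJt e.
have [sx Us] := notJS nJs; have [ty _] := notJT nJt.
have sr1 : (s <= r1)%O := le_trans sx h1.
have tr2 : (t <= r2)%O := le_trans ty h2.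
set a'' := a *m A (s, r2) (x', r2); set b'' := b *m A (r1, t) (r1, y').
have e' : (w *m A d (x', r2) - a'') *m A (x', r2) (r1, r2) = b'' *m A (r1, y') (r1, r2).
  rewrite mulmxBl -!mulmxA !AA ?pleE ?h1 ?h2 ?lexx ?sx ?ty ?tr2 ?sr1 // e.
  by rewrite addrC addKr.
have [u [eu1 eu2]] := ME h1 h2 e'.
have [u0 [eu0 _]] : exists u0, u = u0 *m A (x', t) (x', y') /\
    b = u0 *m A (x', t) (r1, t).
  by apply: ME => //; rewrite -eu2.
have e2 : a *m A (s, r2) (x', r2) = (w - u) *m A (x', y') (x', r2).
  by rewrite mulmxBl -eu1 /a'' opprB addrC subrK.
have [u1 [_ eu1']] := ME sx h2 e2.
apply: Wphi0; rewrite -[w](subrK u) /W.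
apply: addmx_sub_adds.
  by rewrite eu1'; apply: submx_trans Us; exact: submxMl.
by rewrite eu0; apply: submx_trans (t0max nJt); exact: submxMl.
Qed.

Definition Epi (r : S * T) (e : 'rV[k]_(n r)) : Prop := ple d r ->
  [/\ A d r *m e^T = phi, (forall s, ~~ JS s -> A (s, r.2) r *m e^T = 0)
    & (forall t, ~~ JT t -> A (r.1, t) r *m e^T = 0)].

Lemma Epi_ne r : exists e : 'rV[k]_(n r), Epi e.
Proof.
case: (boolP (ple d r)) => hdr; last by exists 0 => h; rewrite h in hdr.
case: r hdr => r1 r2 hdr.
have [h1 h2] : (x' <= r1)%O /\ (y' <= r2)%O by move: hdr; rewrite pleE => /andP.
have monoS : forall s s', ~~ JS s -> ~~ JS s' -> (s <= s')%O ->
    (A (s, r2) (r1, r2) <= A (s', r2) (r1, r2))%MS.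
  move=> s s' _ ns' hss; have [s'x _] := notJS ns'.
  rewrite -(AA (p := (s, r2)) (q := (s', r2))) ?submxMl //.
    by rewrite pleE hss lexx.
  by rewrite pleE (le_trans s'x h1) lexx.
have monoT : forall t t', ~~ JT t -> ~~ JT t' -> (t <= t')%O ->
    (A (r1, t) (r1, r2) <= A (r1, t') (r1, r2))%MS.
  move=> t t' _ nt' htt; have [t'y _] := notJT nt'.
  rewrite -(AA (p := (r1, t)) (q := (r1, t'))) ?submxMl //.
    by rewrite pleE htt lexx.
  by rewrite pleE (le_trans t'y h2) lexx.
have [s0 [ns0 s0max]] := @chain_max _ _ _ _ _ _ _ monoS (ex_intro _ x JS_x).
have [t0' [nt0 t0max']] := @chain_max _ _ _ _ _ _ _ monoT (ex_intro _ y JT_y).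
have hk : forall (w : 'rV_(n d)) (a : 'rV_(n (s0, r2) + n (r1, t0'))),
    w *m A d (r1, r2) + a *m col_mx (A (s0, r2) (r1, r2)) (A (r1, t0') (r1, r2)) = 0 ->
    w *m phi = 0.
  move=> w a; rewrite -[a]hsubmxK mul_row_col => /eqP; rewrite addr_eq0 => /eqP e.
  apply: (kill (s := s0) (t := t0') (a := - lsubmx a) (b := - rsubmx a)) => //.
  by rewrite e opprD !mulNmx.
have [chi [e1 e2]] := solve_lin hk.
move: e2; rewrite mul_col_mx -[0 : 'cV__]col_mx0 => /eq_col_mx [e2 e3].
exists chi^T => _; rewrite trmxK; split => //=.
  move=> s ns; have /submxP [X ->] := s0max s ns.
  by rewrite -mulmxA e2 mulmx0.
move=> t nt; have /submxP [X ->] := t0max' t nt.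
by rewrite -mulmxA e3 mulmx0.
Qed.


Lemma chi_ex : exists chi : forall r, 'rV[k]_(n r),
  (forall r, Epi (chi r)) /\ (forall i j, ple i j -> chi j *m (A i j)^T = chi i).
Proof.
apply: (@inv_limit _ (S * T) (fun i j => ple i j) n (fun i j => (A i j)^T) (fun r e => Epi e)).
- exact: ple_refl.
- move=> i j l; exact: ple_trans.
- exact: ple_up.
- by move=> i; rewrite pmap_id trmx1.
- by move=> i j l hij hjl; rewrite -trmx_mul AA.
- exact: Epi_ne.
- move=> i a b c l ha hb hc hd; case: (ha hd) => a1 a2 a3; case: (hb hd) => b1 b2 b3.
  case: (hc hd) => c1 c2 c3.
  rewrite linearD linearZ /= linearB /=; split; [|move=> s ns|move=> t nt];
    rewrite !mulmxDr -!scalemxAr !mulmxBr.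
  + by rewrite a1 b1 c1 subrr scaler0 addr0.
  + by rewrite a2 // b2 // c2 // subrr scaler0 addr0.
  + by rewrite a3 // b3 // c3 // subrr scaler0 addr0.
- move=> i j e hij he hdi; have hdj := ple_trans hdi hij.
  case: (he hdj) => e1 e2 e3; rewrite trmx_mul trmxK; split.
  + by rewrite mulmxA AA.
  + move=> s ns; have [sx _] := notJS ns.
    have hs : ple (s, i.2) (s, j.2) by rewrite /ple /= lexx; case/andP: hij.
    have hs' : ple (s, j.2) j.
      by rewrite /ple /= lexx andbT; apply: le_trans sx _; case/andP: hdj.
    have hsi : ple (s, i.2) i.
      by rewrite /ple /= lexx andbT; apply: le_trans sx _; case/andP: hdi.
    by rewrite mulmxA AA // -(AA hs hs') -mulmxA e2 // mulmx0.
  + move=> t nt; have [ty _] := notJT nt.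
    have hs : ple (i.1, t) (j.1, t) by rewrite /ple /= lexx andbT; case/andP: hij.
    have hs' : ple (j.1, t) j.
      by rewrite /ple /= lexx /=; apply: le_trans ty _; case/andP: hdj.
    have hsi : ple (i.1, t) i.
      by rewrite /ple /= lexx /=; apply: le_trans ty _; case/andP: hdi.
    by rewrite mulmxA AA // -(AA hs hs') -mulmxA e3 // mulmx0.
Qed.


Definition Eiv (p : {p : S * T | inB JS JT p}) (e : 'rV[k]_(n (val p))) : Prop :=
  ple (val p) d -> e *m A (val p) d = v2.

Lemma iv_ex : exists iv : forall p : {p : S * T | inB JS JT p}, 'rV[k]_(n (val p)),
  (forall p, Eiv (iv p)) /\
  (forall p q, ple (val p) (val q) -> iv p *m A (val p) (val q) = iv q).
Proof.
have [iv [h1 h2]] : exists iv : forall p : {p : S * T | inB JS JT p}, 'rV[k]_(n (val p)),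
    (forall p, Eiv (iv p)) /\
    (forall i j, ple (val j) (val i) -> iv j *m A (val j) (val i) = iv i).
  apply: (@inv_limit _ {p : S * T | inB JS JT p}
    (fun p q => ple (val q) (val p)) (fun p => n (val p))
    (fun p q => A (val q) (val p)) (fun p e => Eiv e)).
- move=> i; exact: ple_refl.
- move=> i j l hij hjl; exact: ple_trans hjl hij.
- move=> [[p1 p2] hp] [[q1 q2] hq].
  have hl : inB JS JT (Order.min p1 q1, Order.min p2 q2).
    move: hp hq; rewrite /inB /= => /andP [a b] /andP [c e].
    by apply/andP; split; rewrite minEle; case: ifP.
  exists (exist (fun p => inB JS JT p) _ hl); rewrite /= !pleE !ge_min !lexx !orbT; split => //.
- by move=> i; rewrite pmap_id.
- by move=> i j l hij hjl; rewrite AA.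
- move=> [[s t] hp]; case: (boolP (ple (s, t) d)) => hd; last first.
    by exists 0 => h; rewrite h in hd.
  have /andP [Js Jt] : (s \in JS) && (t \in JT) := hp.
  move: hd; rewrite pleE => /andP [sx ty].
  by have [u hu] := v2_from Js sx Jt ty; exists u.
- move=> i a b c l ha hb hc hd.
  by rewrite mulmxDl -scalemxAl mulmxBl ha // hb // hc // subrr scaler0 addr0.
- move=> i j e hij he hdi; have hdj := ple_trans hij hdi.
  by rewrite -mulmxA AA // he.
by exists iv; split => // p q hpq; apply: h2.
Qed.


Lemma final_iso : indecomposable M -> mod_iso M (kB k JS_up JT_up).
Proof.
move=> hind.
have [chi [hchi chinat]] := chi_ex.
have [iv [hiv ivnat]] := iv_ex.
pose Mx (p : S * T) := (Order.max p.1 x', Order.max p.2 y').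
have pMx p : ple p (Mx p) by rewrite /ple /= !le_max !lexx.
have dMx p : ple d (Mx p) by rewrite /ple /= !le_max !lexx !orbT.
have MxM p q : ple p q -> ple (Mx p) (Mx q).
  rewrite /ple /= => /andP [a b]; rewrite !ge_max !le_max !lexx !orbT !andbT.
  by rewrite a b.
pose pi p : 'cV[k]_(n p) := A p (Mx p) *m (chi (Mx p))^T.
have chinat' i j : ple i j -> A i j *m (chi j)^T = (chi i)^T.
  by move=> hij; rewrite -(chinat i j hij) trmx_mul trmxK.
have pinat p q : ple p q -> A p q *m pi q = pi p.
  move=> hpq; rewrite /pi mulmxA (AA hpq (pMx q)).
  by rewrite -(AA (pMx p) (MxM _ _ hpq)) -mulmxA (chinat' _ _ (MxM _ _ hpq)).
have pi0 : forall p, ~~ inB JS JT p -> pi p = 0.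
  move=> [p1 p2]; rewrite /inB negb_and /= => hp.
  have [e1 e2 e3] := hchi _ (dMx (p1, p2)); rewrite /pi.
  case/orP: hp => hp.
    have [sx _] := notJS hp.
    have h1 : ple (p1, p2) (p1, (Mx (p1, p2)).2) by rewrite /ple /= lexx le_max lexx.
    have h2 : ple (p1, (Mx (p1, p2)).2) (Mx (p1, p2)).
      by rewrite /ple /= lexx le_max sx orbT.
    by rewrite -(AA h1 h2) -mulmxA e2 // mulmx0.
  have [ty _] := notJT hp.
  have h1 : ple (p1, p2) ((Mx (p1, p2)).1, p2) by rewrite /ple /= lexx le_max lexx.
  have h2 : ple ((Mx (p1, p2)).1, p2) (Mx (p1, p2)).
    by rewrite /ple /= lexx le_max ty orbT.
  by rewrite -(AA h1 h2) -mulmxA e3 // mulmx0.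
pose ivec p : 'rV[k]_(n p) :=
  (if inB JS JT p as b return inB JS JT p = b -> 'rV[k]_(n p)
   then fun h => iv (exist (fun q => inB JS JT q) p h) else fun _ => 0) erefl.
have ivecE : forall p (h : inB JS JT p), ivec p = iv (exist (fun q => inB JS JT q) p h).
  move=> w hw; rewrite /ivec; move: (erefl (inB JS JT w)); rewrite {2 3}hw => h'.
  by rewrite (eq_irrelevance hw h').
have inB_up' : forall p q, ple p q -> inB JS JT p -> inB JS JT q.
  by move=> w1 w2 H3 H4; have /implyP := inB_up JS_up JT_up H3; apply.
refine (@retract_iso _ _ _ _ _ M (kB k JS_up JT_up)
  (fun p => colrep (inB JS JT p) (pi p)) (fun p => rowrep (inB JS JT p) (ivec p)) _ _ _ _ _).
- move=> w w' hpq /=; rewrite /kB_map -/(kBmx _ _).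
  rewrite mul_colrep pinat //.
  case: (boolP (inB JS JT w)) => hp.
    by rewrite colrep_kB //; exact: inB_up' hpq hp.
  by rewrite (pi0 _ hp) !colrep0 mul0mx.
- move=> w w' hpq /=; rewrite /kB_map -/(kBmx _ _).
  case: (boolP (inB JS JT w)) => hp; last by apply: flat_b; apply/negbTE.
  have hq := inB_up' _ _ hpq hp.
  rewrite kB_rowrep // rowrep_mul (ivecE _ hp) (ivecE _ hq).
  by congr rowrep; rewrite (ivnat (exist _ w hp) (exist _ w' hq)).
- move=> w; case/orP: (orbN (inB JS JT w)) => hp; last by apply: flat_b; apply/negbTE.
  apply: rowrep_colrep => //.
  pose m := (Order.min w.1 x', Order.min w.2 y').
  have hm : inB JS JT m.
    have /andP [a b] : (w.1 \in JS) && (w.2 \in JT) := hp.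
    have JSx' : x' \in JS := JS_x'.
    have JTy' : y' \in JT := JT_y'.
    by rewrite /inB /= !minEle; case: ifP => _; case: ifP => _; rewrite ?a ?b ?JSx' ?JTy'.
  have hmp : ple m w by rewrite /ple /= !ge_min !lexx.
  have hmd : ple m d by rewrite /ple /= !ge_min !lexx !orbT.
  rewrite (ivecE _ hp) -(ivnat (exist _ m hm) (exist _ w hp) hmp) /= /pi.
  have [e1 _ _] := hchi _ (dMx w).
  rewrite -mulmxA (mulmxA (A m w)) (AA hmp (pMx w)) -(AA hmd (dMx w)) -mulmxA e1.
  by rewrite mulmxA (hiv (exist _ m hm) hmd) v2phi.
- have JSx' : x' \in JS := JS_x'.
  have JTy' : y' \in JT := JT_y'.
  by move=> /(_ d) /=; rewrite /inB /= JSx' JTy'.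
- exact: hind.
Qed.

End Phi.
End T1.
End S1.
End Main.

Require Import Defs.

Theorem lemma5p6 (k : fieldType) (dS dT : Order.disp_t)
  (S : orderType dS) (T : orderType dT) (M : pfdMod k S T) :
  middle_exact M ->
  indecomposable M ->
  (exists (x x' : S) (y y' : T), (x <= x')%O /\ (y <= y')%O /\
     exists z : 'rV[k]_(pdim M (x', y')),
       forall (v : 'rV[k]_(pdim M (x, y'))) (w : 'rV[k]_(pdim M (x', y))),
         sq_diff (x', y') v w <> z) ->
  exists (JS : pred S) (JT : pred T)
         (hS : up_closed JS) (hT : up_closed JT),
    nonempty JS /\ nonempty JT /\ mod_iso M (kB k hS hT).
Proof.
move=> hME hind [x [x' [y [y' [hx [hy [z hz]]]]]]].
have zU : ~~ (z <= U M x x' y y')%MS.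
  apply/negP => /sub_addsmxP [[u1 u2] /= e]; apply: (hz u1 (- u2)).
  by rewrite /sq_diff e mulNmx opprK.
pose JS0 := JS M x x' y y'.
have monoS : forall s s', JS0 s && (s <= x')%O -> JS0 s' && (s' <= x')%O ->
    (s <= s')%O -> (pmap M (s, y') (x', y') <= pmap M (s', y') (x', y'))%MS.
  by move=> s s' _ /andP [_ h] hs; apply: Ims_mono.
have [s1 [/andP [JSs1 s1x] s1min]] := chain_min monoS (ex_intro _ x' (introT andP (conj (JS_x' zU) (lexx x')))).
pose JT0 := JT M x x' y y' s1.
have monoT : forall t t', JT0 t && (t <= y')%O -> JT0 t' && (t' <= y')%O ->
    (t <= t')%O -> ((pmap M (s1, y') (x', y') :&: pmap M (x', t) (x', y')) <=
                    (pmap M (s1, y') (x', y') :&: pmap M (x', t') (x', y')))%MS.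
  by move=> t t' _ /andP [_ h] ht; apply: capmxS => //; apply: Imt_mono.
have [t1 [/andP [JTt1 t1y] t1min]] := chain_min monoT
  (ex_intro _ y' (introT andP (conj (JT_y' JSs1 s1x) (lexx y')))).
have monoT0 : forall t t', ~~ JT0 t -> ~~ JT0 t' ->
    (t <= t')%O -> (pmap M (x', t) (x', y') <= pmap M (x', t') (x', y'))%MS.
  move=> t t' _ h ht; apply: Imt_mono => //.
  by case: (notJT h).
have [t0 [nJTt0 t0max]] := chain_max monoT0 (ex_intro _ y (JT_y M x x' hy s1)).
have [v2 [phi [h1 [h2 h3]]]] := v2phi_ex hx hy JSs1 s1x JTt1 t1y nJTt0.
exists JS0, JT0, (JS_up (M:=M) (x:=x) (x':=x') (y:=y) (y':=y')), (@JT_up _ _ _ _ _ M x x' y y' s1).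
split; first by exists x'; exact: (JS_x' zU).
split; first by exists y'; exact: (JT_y' JSs1 s1x).
apply: (final_iso hME hx hy zU JSs1 s1x _ _ _ h1 h2 h3 hind).
- by move=> s hs hs'; apply: s1min; apply/andP; split.
- by move=> t ht ht'; apply: t1min; apply/andP; split.
- exact: t0max.
Qed.
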